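(* Let $\mathfrak{h}$ be a finite-dimensional Hilbert space and let $\mathcal{L}_t=\sum_{m\in\mathbb{Z}}\mathcal{L}_m e^{-\mathrm{i}m\omega t}$ be a $T$-periodic Lindbladian ($\omega=2\pi/T$) on operators on $\mathfrak{h}$, as described in the context. For every integer $N\ge 0$, let $\mathcal{L}_\mathrm{eff}=\sum_{k=0}^{N}\mathcal{L}_\mathrm{eff}^{(k)}$ be the van Vleck high-frequency expansion of the effective Liouvillian truncated at order $N$. Then $\mathrm{tr}[\mathcal{L}_\mathrm{eff}(A)]=0$ for every operator $A$ on $\mathfrak{h}$.
   Context: The Lindbladian is $\mathcal{L}_t(\rho)=-\mathrm{i}[H(t),\rho]+\sum_\alpha\big[L_\alpha(t)\rho L_\alpha^\dagger(t)-\tfrac12\{L_\alpha^\dagger(t)L_\alpha(t),\rho\}\big]$, where $H(t)=H(t+T)$ is Hermitian and the (finitely many) jump operators satisfy $L_\alpha(t+T)=L_\alpha(t)$. Writing $H(t)=\sum_m H_m e^{-\mathrm{i}m\omega t}$ and $L_\alpha(t)=\sum_m L_{\alpha,m}e^{-\mathrm{i}m\omega t}$ (so $L_\alpha^\dagger(t)=\sum_m L_{\alpha,m}^\dagger e^{\mathrm{i}m\omega t}$), the Fourier components are $\mathcal{L}_m=\mathcal{H}_m+\mathcal{D}_m$ with $\mathcal{H}_m(\rho)=-\mathrm{i}[H_m,\rho]$ and $\mathcal{D}_m(\rho)=\sum_{\alpha,n}\big[L_{\alpha,m-n}\rho L_{\alpha,n}^\dagger-\tfrac12\{L_{\alpha,n}^\dagger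 L_{\alpha,m-n},\rho\}\big]$ (all Fourier sums assumed convergent). The van Vleck high-frequency expansion is defined via the ansatz $\mathcal{V}(t,t')=e^{\mathcal{G}_t}e^{\mathcal{L}_\mathrm{eff}(t-t')}e^{-\mathcal{G}_{t'}}$ for the propagator, with $\mathcal{G}_t$ periodic, $\mathcal{L}_\mathrm{eff}=\sum_{k\ge0}\mathcal{L}_\mathrm{eff}^{(k)}$, $\mathcal{L}_\mathrm{eff}^{(k)}=O(\omega^{-k})$; it is obtained from the isolated-system van Vleck expansion by the substitution $H_m\to\mathrm{i}\mathcal{L}_m$, $H_\mathrm{eff}\to\mathrm{i}\mathcal{L}_\mathrm{eff}$. Explicitly $\mathcal{L}_\mathrm{eff}^{(0)}=\mathcal{L}_0$, $\mathrm{i}\mathcal{L}_\mathrm{eff}^{(1)}=\sum_{m\ne0}\frac{[\mathrm{i}\mathcal{L}_{-m},\mathrm{i}\mathcal{L}_m]}{2m\omega}$, $\mathrm{i}\mathcal{L}_\mathrm{eff}^{(2)}=\sum_{m\ne0}\frac{[[\mathrm{i}\mathcal{L}_{-m},\mathrm{i}\mathcal{L}_0],\mathrm{i}\mathcal{L}_m]}{2m^2\omega^2}+\sum_{m\ne0}\sum_{n\ne0,m}\frac{[[\mathrm{i}\mathcal{L}_{-m},\mathrm{i}\mathcal{L}_{m-n}],\mathrm{i}\mathcal{L}_n]}{3mn\omega^2}$, and in general each $\mathcal{L}_\mathrm{eff}^{(k)}$ with $k\ge1$ is a linear combination (with complex coefficients) of nested commutators of the superoperators $\mathcal{L}_m$.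 Commutators of superoperators are $[\mathcal{A},\mathcal{B}]=\mathcal{A}\mathcal{B}-\mathcal{B}\mathcal{A}$. *)

(* Defs.v *)
From HB Require Import structures.
From mathcomp Require Import all_boot all_order all_algebra.
From mathcomp Require Import all_classical all_reals all_analysis.
From mathcomp Require Import complex.

Set Implicit Arguments.
Unset Strict Implicit.
Unset Printing Implicit Defensive.

Import Order.TTheory GRing.Theory Num.Theory.
Import numFieldNormedType.Exports.
Local Open Scope ring_scope.

Section Lindblad.
Variables (R : realType) (d : nat).
Local Notation C := (R[i]).

Definition op := 'M[C]_d.
Definition superop := op -> op.

Definition adj (A : op) : op := \matrix_(i, j) conjc (A j i).

Definition scomm (A B : superop) : superop := fun X => A (B X) - B (A X).

Definition cvgC (u : nat -> C) (l : C) : Prop :=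
  (((fun n => complex.Re (u n)) @ \oo --> (complex.Re l : R)) /\ ((fun n => complex.Im (u n)) @ \oo --> complex.Im l))%classic.

Definition cvg_op (u : nat -> op) (l : op) : Prop :=
  forall i j, cvgC (fun n => u n i j) (l i j).

Definition cvg_superop (u : nat -> superop) (l : superop) : Prop :=
  forall X, cvg_op (fun n => u n X) (l X).

(* symmetric partial sums  \sum_{n=-K}^{K} f n  of a bi-infinite series over Z *)
Definition sym_psum (f : int -> op) (K : nat) : op :=
  \sum_(0 <= k < (K + K).+1) f (k%:Z - K%:Z).

(* n-th term of the series defining D_m(rho), for finitely many jump operators
   Lj a : int -> op (Fourier components L_{a,m}) *)
Definition diss_term (p : nat) (Lj : 'I_p -> int -> op) (m : int) (rho : op)
    (n : int) : op :=
  \sum_(a < p)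
     (Lj a (m - n) *m rho *m adj (Lj a n)
      - (1 / 2 : C) *: (adj (Lj a n) *m Lj a (m - n) *m rho
                        + rho *m (adj (Lj a n) *m Lj a (m - n)))).

Definition is_dissipator_comp (p : nat) (Lj : 'I_p -> int -> op)
    (D : int -> superop) : Prop :=
  forall m rho, cvg_op (sym_psum (diss_term Lj m rho)) (D m rho).

Definition Lcomp (H : int -> op) (D : int -> superop) (m : int) : superop :=
  fun rho => (- 'i%C) *: (H m *m rho - rho *m H m) + D m rho.

Inductive nested (L : int -> superop) : superop -> Prop :=
| nested_atom m : nested L (L m)
| nested_comm A B : nested L A -> nested L B -> nested L (scomm A B).

(* complex linear combinations (finite, or convergent infinite sums,
   i.e. pointwise limits) of nested commutators with at least one bracket *)
Inductive comm_comb (L : int -> superop) : superop -> Prop :=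
| cc_zero : comm_comb L (fun _ => 0)
| cc_add (c : C) A B Y :
    nested L A -> nested L B -> comm_comb L Y ->
    comm_comb L (fun X => c *: scomm A B X + Y X)
| cc_lim (u : nat -> superop) (l : superop) :
    (forall n, comm_comb L (u n)) -> cvg_superop u l -> comm_comb L l.

End Lindblad.

(* Main.v *)
Require Import Defs.
From HB Require Import structures.
From mathcomp Require Import all_boot all_order all_algebra.
From mathcomp Require Import all_classical all_reals all_analysis.
From mathcomp Require Import complex.
From mathcomp Require Import ring.

Import Order.TTheory GRing.Theory Num.Theory.
Import numFieldNormedType.Exports.
Set Implicit Arguments.
Unset Strict Implicit.
Local Open Scope ring_scope.
Local Open Scope classical_set_scope.

Lemma Re_sum (R : realType) n (f : 'I_n -> R[i]) :
  complex.Re (\sum_(i < n) f i) = \sum_(i < n) complex.Re (f i).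
Proof.
elim/big_rec2: _ => //= i a b _ <-.
by case: (f i) => ? ?; case: b => ? ?.
Qed.

Lemma Im_sum (R : realType) n (f : 'I_n -> R[i]) :
  complex.Im (\sum_(i < n) f i) = \sum_(i < n) complex.Im (f i).
Proof.
elim/big_rec2: _ => //= i a b _ <-.
by case: (f i) => ? ?; case: b => ? ?.
Qed.

Lemma cvg_finsum (R : realType) n (u : nat -> 'I_n -> R) (l : 'I_n -> R) :
  (forall i, u^~ i @ \oo --> l i) ->
  (fun k => \sum_(i < n) u k i) @ \oo --> \sum_(i < n) l i.
Proof.
move=> h.
elim: n u l h => [|n IH] u l h.
  rewrite big_ord0. under eq_fun do rewrite big_ord0. exact: cvg_cst.
rewrite big_ord_recl. under eq_fun do rewrite big_ord_recl.
apply: cvgD; first exact: h.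
exact: (IH (fun k i => u k (lift ord0 i)) (fun i => l (lift ord0 i))).
Qed.

Lemma cvg0_uniq (R : realType) (v : nat -> R) (a : R) :
  v @ \oo --> a -> (forall k, v k = 0) -> a = 0.
Proof.
move=> hv h0.
have ev : v = fun _ => 0 by apply: funext.
rewrite ev in hv.
exact: (cvg_unique _ hv (cvg_cst (0:R))).
Qed.

Lemma tr_lim (R : realType) d (u : nat -> op R d) (l : op R d) :
  cvg_op u l -> (forall k, \tr (u k) = 0) -> \tr l = 0.
Proof.
move=> hc h0; rewrite /mxtrace.
have hRe : complex.Re (\sum_i l i i) = 0.
  rewrite Re_sum; apply: (@cvg0_uniq R _ _ (@cvg_finsum R d (fun k i => complex.Re (u k i i)) _ _)).
    by move=> i; case: (hc i i).
  by move=> k; rewrite -Re_sum; have := h0 k; rewrite /mxtrace => ->.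
have hIm : complex.Im (\sum_i l i i) = 0.
  rewrite Im_sum; apply: (@cvg0_uniq R _ _ (@cvg_finsum R d (fun k i => complex.Im (u k i i)) _ _)).
    by move=> i; case: (hc i i).
  by move=> k; rewrite -Im_sum; have := h0 k; rewrite /mxtrace => ->.
move: hRe hIm; case: (\sum_i l i i) => a b /= -> -> //.
Qed.

Definition trless {R : realType} {d} (S : superop R d) := forall X, \tr (S X) = 0.

Lemma diss_tr (R : realType) d p (Lj : 'I_p -> int -> op R d) m rho n :
  \tr (diss_term Lj m rho n) = 0.
Proof.
rewrite /diss_term raddf_sum /=; apply: big1 => a _.
rewrite raddfB /= [X in _ - X]mxtraceZ mxtraceD.
idtac.
rewrite [Z in Z - _]mxtrace_mulC [Z in _ * (_ + Z)]mxtrace_mulC !mulmxA.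
set t := \tr _.
have h2 : (2 : R[i]) != 0 by rewrite pnatr_eq0.
by field.
Qed.

Lemma Lcomp_tr (R : realType) d p (H : int -> op R d) (Lj : 'I_p -> int -> op R d)
  (D : int -> superop R d) : is_dissipator_comp Lj D -> forall m, trless (Lcomp H D m).
Proof.
move=> hD m X; rewrite /Lcomp mxtraceD mxtraceZ raddfB /= [Z in Z - _]mxtrace_mulC subrr mulr0 add0r.
apply: (tr_lim (hD m X)) => K.
rewrite /sym_psum raddf_sum /=; apply: big1 => k _; exact: diss_tr.
Qed.

Lemma nested_tr (R : realType) d (L : int -> superop R d) :
  (forall m, trless (L m)) -> forall S, nested L S -> trless S.
Proof.
move=> hL S; elim=> [m|A B _ hA _ hB]; first exact: hL.
by move=> X; rewrite /scomm raddfB /= hA hB subrr.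
Qed.

Lemma comb_tr (R : realType) d (L : int -> superop R d) :
  (forall m, trless (L m)) -> forall S, comm_comb L S -> trless S.
Proof.
move=> hL S; elim=> [|c A B Y nA nB _ hY|u l _ hu hc] X.
- by rewrite /= mxtrace0.
- rewrite mxtraceD mxtraceZ hY addr0.
  by rewrite (nested_tr hL (nested_comm nA nB)) mulr0.
- exact: (tr_lim (hc X) (fun n => hu n X)).
Qed.

Unset Implicit Arguments.
Theorem lemma1 (R : realType) (d p : nat)
  (H : int -> op R d) (Lj : 'I_p -> int -> op R d) (D : int -> superop R d)
  (hHerm : forall m : int, H (- m) = adj (H m))
  (hD : is_dissipator_comp Lj D)
  (Leff : nat -> superop R d)
  (hLeff0 : Leff 0%N = Lcomp H D 0)
  (hLeffk : forall k : nat, (0 < k)%N -> comm_comb (Lcomp H D) (Leff k))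
  (N : nat) (A : op R d) :
  \tr (\sum_(k < N.+1) Leff k A) = 0.
Proof.
rewrite raddf_sum /=; apply: big1 => -[[|k] hk] _ /=.
  by rewrite hLeff0; exact: (Lcomp_tr H hD).
exact: (comb_tr (Lcomp_tr H hD) (hLeffk k.+1 isT)).
Qed.
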